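(* Let $\kappa$ and $\lambda$ be uncountable cardinals. If there exists a $\kappa$-complete non-principal ultrafilter $\mathcal U$ on $\lambda$, then $\ell_\infty(\lambda)$ admits an equivalent norm for which it is $\mathrm{SQ}_{<\kappa}$.
   Context: A non-principal ultrafilter is $\kappa$-complete if it is closed under intersections of fewer than $\kappa$ of its members. A Banach space $Z$ is $\mathrm{SQ}_{<\kappa}$ if for every set $A\subset S_Z$ with $|A|<\kappa$ there exists $y\in S_Z$ with $\|x\pm y\|\le 1$ for all $x\in A$. *)

(* Defs.v *)
From mathcomp Require Import all_boot all_order all_algebra.
From mathcomp Require Import all_classical all_reals.
Set Implicit Arguments. Unset Strict Implicit. Unset Printing Implicit Defensive.
Import Order.TTheory GRing.Theory Num.Theory.
Local Open Scope classical_set_scope.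
Local Open Scope ring_scope.

Definition card_lt {T U} (A : set T) (B : set U) : Prop :=
  (A #<= B)%card /\ ~ (B #<= A)%card.

(* uncountable type (cardinal represented by a type) *)
Definition uncountable_type (T : Type) : Prop := ~ countable [set: T].

(* ultrafilter on L, non-principal, kappa-complete where kappa = |K| *)
Definition ultrafilter_on {L} (U : set (set L)) : Prop :=
  [/\ U setT, ~ U set0,
      (forall A B, U A -> U B -> U (A `&` B)),
      (forall A B, A `<=` B -> U A -> U B) &
      (forall A, U A \/ U (~` A))].

Definition nonprincipal {L} (U : set (set L)) : Prop :=
  forall x : L, ~ U [set x].

Definition kappa_complete (K : Type) {L} (U : set (set L)) : Prop :=
  forall F : set (set L), F `<=` U -> card_lt F [set: K] ->
    U (\bigcap_(A in F) A).

Definition bounded_fun {R : realType} {L} (x : L -> R) : Prop :=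
  exists M : R, forall i, `|x i| <= M.

Definition linf_norm {R : realType} {L} (x : L -> R) : R :=
  sup (range (fun i => `|x i|)).

Definition equiv_norm_linf {R : realType} {L} (N : (L -> R) -> R) : Prop :=
  [/\ (forall x, bounded_fun x -> N x = 0 -> x = (fun=> 0)),
      (forall (a : R) x, bounded_fun x -> N (fun i => a * x i) = `|a| * N x),
      (forall x y, bounded_fun x -> bounded_fun y ->
          N (fun i => x i + y i) <= N x + N y) &
      (exists c C : R, [/\ 0 < c, 0 < C &
          forall x, bounded_fun x ->
            c * linf_norm x <= N x /\ N x <= C * linf_norm x])].

(* (ell_infinity(L), N) is SQ_{<kappa}, kappa = |K| *)
Definition SQ_lt (K : Type) {R : realType} {L} (N : (L -> R) -> R) : Prop :=
  forall A : set (L -> R),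
    A `<=` [set x | bounded_fun x /\ N x = 1] -> card_lt A [set: K] ->
    exists y : L -> R, [/\ bounded_fun y, N y = 1 &
      forall x, A x -> N (fun i => x i + y i) <= 1 /\ N (fun i => x i - y i) <= 1].

(* Main.v *)
Require Import Defs.
From mathcomp Require Import all_boot all_order all_algebra.
From mathcomp Require Import all_classical all_reals.
From mathcomp Require Import ring lra.
Set Implicit Arguments. Unset Strict Implicit. Unset Printing Implicit Defensive.
Import Order.TTheory GRing.Theory Num.Theory.
Local Open Scope classical_set_scope.
Local Open Scope ring_scope.

Section Lim.
Variables (R : realType) (L : Type) (U : set (set L)).
Hypothesis hU : ultrafilter_on U.
Hypothesis hcc : forall G : nat -> set L, (forall n, U (G n)) ->
  U (\bigcap_(A in range G) A).

Lemma U_up A B : A `<=` B -> U A -> U B.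
Proof. by case: hU => _ _ _ H _; apply: H. Qed.

Lemma U_I A B : U A -> U B -> U (A `&` B).
Proof. by case: hU => _ _ H _ _; apply: H. Qed.

Lemma U_T : U setT. Proof. by case: hU. Qed.

Lemma U_ne A : U A -> exists i, A i.
Proof.
move=> UA; case: hU => _ H0 _ _ _.
apply: contrapT => hn; apply: H0; suff -> : set0 = A by [].
by apply/seteqP; split => // i Ai; apply: hn; exists i.
Qed.

Lemma U_C A : ~ U A -> U (~` A).
Proof. by case: hU => _ _ _ _ H; case: (H A). Qed.

Lemma Uuniq (x : L -> R) a b :
  U [set i | x i = a] -> U [set i | x i = b] -> a = b.
Proof.
move=> Ha Hb; have [i [/= <- <-]] := U_ne (U_I Ha Hb); done.
Qed.

Lemma Uex (x : L -> R) : bounded_fun x -> exists a, U [set i | x i = a].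
Proof.
case=> M hM.
pose E := [set t : R | U [set i | t <= x i]].
have E0 : E (- M).
  apply: U_up U_T => i _ /=; rewrite lerNl; apply: le_trans (hM i).
  by rewrite -normrN ler_norm.
have Eub : ubound E M.
  move=> t Et; rewrite leNgt; apply/negP => Mt.
  have [i /= ti] := U_ne Et.
  have := le_trans (le_trans ti (ler_norm _)) (hM i); rewrite leNgt Mt //.
have hs : has_sup E by split; [exists (- M) | exists M].
exists (sup E).
pose G := fun n : nat => [set i | `|x i - sup E| < n.+1%:R^-1].
have UG : forall n, U (G n).
  move=> n; have e0 : (0 : R) < n.+1%:R^-1 by rewrite invr_gt0 ltr0n.
  have [t Et ht] := sup_adherent e0 hs.
  have H1 : U [set i | sup E - n.+1%:R^-1 < x i].
    by apply: U_up Et => i /= ti; apply: lt_le_trans ti.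
  have H2 : U [set i | x i < sup E + n.+1%:R^-1].
    have nE : ~ E (sup E + n.+1%:R^-1).
      move=> /(sup_upper_bound hs); rewrite gerDl leNgt e0 //.
    by apply: U_up (U_C nE) => i /= /negP; rewrite -ltNge.
  apply: U_up (U_I H1 H2) => i [/= h1 h2].
  have key : forall a b e : R, a - e < b -> b < a + e -> `|b - a| < e.
    by move=> a b e' g1 g2; rewrite ltr_norml; apply/andP; split; lra.
  exact: key.
apply: U_up (hcc UG) => i /= hi.
apply: contrapT => neq.
have d0 : 0 < `|x i - sup E| by rewrite normr_gt0 subr_eq0; apply/eqP.
pose n := Num.Def.archi_bound (`|x i - sup E|^-1).
have hn := @archi_boundP R (`|x i - sup E|^-1) (ltW (eq_ind_r is_true d0 (invr_gt0 _))).
have := hi (G n) (ex_intro2 _ _ n I erefl); rewrite /G /=.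
have : (n%:R : R) < n.+1%:R by rewrite ltr_nat.
move=> hn1 hlt.
move: hlt; rewrite -ltf_pV2 ?posrE ?invr_gt0 ?ltr0n // invrK => h.
by move: (lt_trans h (lt_trans hn hn1)); rewrite ltxx.
Qed.

Definition ulim (x : L -> R) : R := xget 0 [set a | U [set i | x i = a]].

Lemma ulimP x : bounded_fun x -> U [set i | x i = ulim x].
Proof. by move=> /Uex ex; apply: (xgetPex 0 ex). Qed.

Lemma ulimE x a : U [set i | x i = a] -> ulim x = a.
Proof.
move=> H; apply: xget_unique => // b Hb; exact: Uuniq Hb H.
Qed.


Variable l0 : L.

Lemma bnd_ub (x : L -> R) : bounded_fun x -> has_ubound (range (fun i => `|x i|)).
Proof. by case=> M hM; exists M => _ [i _ <-]. Qed.

Lemma linf_ub (x : L -> R) i : bounded_fun x -> `|x i| <= linf_norm x.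
Proof. by move=> /bnd_ub h; apply: ub_le_sup h _ _; exists i. Qed.

Lemma linf_le (x : L -> R) M : (forall i, `|x i| <= M) -> linf_norm x <= M.
Proof. by move=> hM; apply: ge_sup; [exists `|x l0|, l0 | move=> _ [i _ <-]]. Qed.

Lemma linf_ge0 (x : L -> R) : bounded_fun x -> 0 <= linf_norm x.
Proof. by move=> b; apply: le_trans (linf_ub l0 b). Qed.

Lemma bnd_lin (x y : L -> R) a b c : bounded_fun x -> bounded_fun y ->
  bounded_fun (fun i => a * x i + b * y i + c : R).
Proof.
case=> M hM [N hN]; exists (`|a| * M + `|b| * N + `|c|) => i.
apply: le_trans (ler_normD _ _) _; rewrite lerD2r.
apply: le_trans (ler_normD _ _) _; rewrite !normrM.
by apply: lerD; apply: ler_wpM2l.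
Qed.

Lemma bnd_cst (c : R) : bounded_fun (fun _ : L => c).
Proof. by exists `|c|. Qed.

Lemma bndD (x y : L -> R) : bounded_fun x -> bounded_fun y -> bounded_fun (fun i => x i + y i).
Proof. move=> bx hy; have -> : (fun i => x i + y i) = (fun i => 1 * x i + 1 * y i + 0).
  by apply: funext => i; rewrite !mul1r addr0.
exact: bnd_lin. Qed.

Lemma bndB (x y : L -> R) : bounded_fun x -> bounded_fun y -> bounded_fun (fun i => x i - y i).
Proof. move=> bx hy; have -> : (fun i => x i - y i) = (fun i => 1 * x i + (-1) * y i + 0).
  by apply: funext => i; rewrite !mul1r addr0 mulN1r.
exact: bnd_lin. Qed.

Lemma bndZ a (x : L -> R) : bounded_fun x -> bounded_fun (fun i => a * x i).
Proof. move=> bx; have -> : (fun i => a * x i) = (fun i => a * x i + 0 * x i + 0).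
  by apply: funext => i; rewrite mul0r !addr0.
exact: bnd_lin. Qed.

Lemma bndBc (x : L -> R) c : bounded_fun x -> bounded_fun (fun i => x i - c).
Proof. by move=> bx; apply: bndB bx (bnd_cst c). Qed.

Lemma ulimD (x y : L -> R) : bounded_fun x -> bounded_fun y ->
  ulim (fun i => x i + y i) = ulim x + ulim y.
Proof.
move=> bx hy; apply: ulimE; apply: U_up (U_I (ulimP bx) (ulimP hy)).
by move=> i [/= -> ->].
Qed.

Lemma ulimB (x y : L -> R) : bounded_fun x -> bounded_fun y ->
  ulim (fun i => x i - y i) = ulim x - ulim y.
Proof.
move=> bx hy; apply: ulimE; apply: U_up (U_I (ulimP bx) (ulimP hy)).
by move=> i [/= -> ->].
Qed.

Lemma ulimZ a (x : L -> R) : bounded_fun x -> ulim (fun i => a * x i) = a * ulim x.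
Proof. by move=> bx; apply: ulimE; apply: U_up (ulimP bx) => i /= ->. Qed.

Lemma ulim_le (x : L -> R) : bounded_fun x -> `|ulim x| <= linf_norm x.
Proof. by move=> bx; have [i /= <-] := U_ne (ulimP bx); apply: linf_ub. Qed.

Definition NN (x : L -> R) : R :=
  Num.max `|ulim x| (linf_norm (fun i => x i - ulim x) / 2).

Lemma NN_ge1 (x : L -> R) : `|ulim x| <= NN x.
Proof. by rewrite /NN le_max lexx. Qed.

Lemma NN_ge2 (x : L -> R) i : bounded_fun x -> `|x i - ulim x| <= 2 * NN x.
Proof.
move=> bx; have h1 := linf_ub i (bndBc (ulim x) bx).
have : linf_norm (fun i => x i - ulim x) / 2 <= NN x by rewrite /NN le_max lexx orbT.
move: h1; generalize (linf_norm (fun i => x i - ulim x)) => s h1 h2; lra.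
Qed.

Lemma NN_le (x : L -> R) M : 0 <= M -> `|ulim x| <= M -> (forall i, `|x i - ulim x| <= 2 * M) -> NN x <= M.
Proof.
move=> M0 h1 h2; rewrite /NN ge_max h1 /=.
have := linf_le h2; generalize (linf_norm (fun i => x i - ulim x)) => s h; lra.
Qed.

Lemma NN_ge0 (x : L -> R) : 0 <= NN x.
Proof. exact: le_trans (normr_ge0 _) (NN_ge1 x). Qed.


Lemma NN_eq0 (x : L -> R) : bounded_fun x -> NN x = 0 -> x = (fun=> 0).
Proof.
move=> bx h0; have h1 := NN_ge1 x; rewrite h0 normr_le0 in h1.
apply: funext => i; have := NN_ge2 i bx; rewrite h0 mulr0 normr_le0 subr_eq0.
by move/eqP => ->; apply/eqP.
Qed.

Lemma NN_Zle a (x : L -> R) : bounded_fun x -> NN (fun i => a * x i) <= `|a| * NN x.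
Proof.
move=> bx; apply: NN_le; first by rewrite mulr_ge0 ?NN_ge0.
  by rewrite ulimZ // normrM ler_wpM2l ?NN_ge1.
move=> i; rewrite ulimZ // -mulrBr normrM mulrCA ler_wpM2l //.
exact: NN_ge2.
Qed.

Lemma NN_Z a (x : L -> R) : bounded_fun x -> NN (fun i => a * x i) = `|a| * NN x.
Proof.
move=> bx; apply/le_anti; rewrite NN_Zle //=.
have [->|a0] := eqVneq a 0; first by rewrite normr0 mul0r NN_ge0.
have := NN_Zle a^-1 (bndZ a bx).
have -> : (fun i => a^-1 * (a * x i)) = x by apply: funext => i; rewrite mulrA mulVf ?mul1r.
move=> h; have : `|a| * NN x <= `|a| * (`|a^-1| * NN (fun i => a * x i)).
  by rewrite ler_wpM2l.
by rewrite mulrA normrV ?unitfE // mulfV ?normr_eq0 // mul1r.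
Qed.

Lemma NN_D (x y : L -> R) : bounded_fun x -> bounded_fun y ->
  NN (fun i => x i + y i) <= NN x + NN y.
Proof.
move=> bx hy; apply: NN_le; first by rewrite addr_ge0 ?NN_ge0.
  rewrite ulimD //; apply: le_trans (ler_normD _ _) _; apply: lerD; exact: NN_ge1.
move=> i; rewrite ulimD //.
have -> : x i + y i - (ulim x + ulim y) = (x i - ulim x) + (y i - ulim y) by ring.
apply: le_trans (ler_normD _ _) _; rewrite mulrDr; apply: lerD; exact: NN_ge2.
Qed.

Lemma NN_lo (x : L -> R) : bounded_fun x -> 3^-1 * linf_norm x <= NN x.
Proof.
move=> bx; have : linf_norm x <= 3 * NN x.
  apply: linf_le => i; have := NN_ge2 i bx; have := NN_ge1 x.
  have := ler_normD (x i - ulim x) (ulim x); rewrite subrK.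
  lra.
lra.
Qed.

Lemma NN_hi (x : L -> R) : bounded_fun x -> NN x <= linf_norm x.
Proof.
move=> bx; apply: NN_le; [exact: linf_ge0| exact: ulim_le|] => i.
have := ler_normB (x i) (ulim x); have := ulim_le bx; have := linf_ub i bx.
lra.
Qed.

End Lim.

Theorem proposition3p6 (R : realType) (K L : Type) :
  uncountable_type K -> uncountable_type L ->
  (exists U : set (set L), [/\ ultrafilter_on U, nonprincipal U & kappa_complete K U]) ->
  exists N : (L -> R) -> R, equiv_norm_linf N /\ SQ_lt K N.
Proof.
move=> Kunc Lunc [U [hU hnp hk]].
have [l0 _] := U_ne hU (U_T hU).
have NK : ([set: nat] #<= [set: K])%card.
  by apply/infiniteP => /finite_set_countable.
have hcc : forall G : nat -> set L, (forall n, U (G n)) ->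
    U (\bigcap_(A in range G) A).
  move=> G hG; apply: hk; first by move=> _ [n _ <-].
  split; first exact: card_le_trans (card_image_le G setT) NK.
  by move=> hle; apply: Kunc; apply: card_le_trans hle (card_image_le G setT).
exists (NN U); split.
  split.
  - by move=> x bx; apply: NN_eq0.
  - by move=> a x bx; apply: (NN_Z hU hcc).
  - by move=> x y bx hy; apply: (NN_D hU hcc l0).
  - exists 3^-1, 1; split => //; first by rewrite invr_gt0.
    move=> x bx; split; first exact: (NN_lo U l0 bx).
    by have := NN_hi hU hcc l0 bx; lra.
move=> A hA hcard.
pose S := fun x : L -> R => [set i | x i = ulim U x].
have hF : U (\bigcap_(B in S @` A) B).
  apply: hk; first by move=> _ [x Ax <-]; have [bx _] := hA x Ax; exact: (ulimP hU hcc bx).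
  case: hcard => h1 h2; split; first exact: card_le_trans (card_image_le S A) h1.
  by move=> h; apply: h2; apply: card_le_trans h (card_image_le S A).
have [s hs] := U_ne hU hF.
have hsx : forall x, A x -> x s = ulim U x by move=> x Ax; apply: (hs (S x)); exists x.
pose y := fun i => if pselect (i = s) then (2:R) else 0.
have hy : bounded_fun y.
  by exists 2 => i; rewrite /y; case: pselect => ?; rewrite ?normr0 // ger0_norm.
have ly : ulim U y = 0.
  apply: ulimE => //; have : U (~` [set s]) by apply: U_C => //; apply: hnp.
  by apply: (U_up hU) => i /= ne; rewrite /y; case: pselect.
exists y; split => //.
  rewrite /NN ly normr0.
  have -> : linf_norm (fun i => y i - 0) = 2.
    apply/le_anti/andP; split.
      by apply: linf_le => // i; rewrite subr0 /y; case: pselect => ?; rewrite ?normr0 // ger0_norm.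
    have := linf_ub s (bndBc 0 hy); rewrite subr0 /y; case: pselect => // ?.
    by rewrite ger0_norm.
  rewrite divff ?pnatr_eq0 //.
  by rewrite maxEle ler01.
move=> x Ax; have [bx Nx] := hA x Ax.
have h2 := fun i => NN_ge2 U i bx; rewrite Nx mulr1 in h2.
split.
  apply: (NN_le l0) => //.
    by rewrite (ulimD hU hcc) // ly addr0 -Nx NN_ge1.
  move=> i; rewrite (ulimD hU hcc) // ly addr0 mulr1 /y; case: pselect => [e|ne] /=; first rewrite e.
    by rewrite hsx // addrC addKr ger0_norm.
  by rewrite addr0.
apply: (NN_le l0) => //.
  by rewrite (ulimB hU hcc) // ly subr0 -Nx NN_ge1.
move=> i; rewrite (ulimB hU hcc) // ly subr0 mulr1 /y; case: pselect => [e|ne] /=; first rewrite e.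
  by rewrite hsx // addrC addKr normrN ger0_norm.
by rewrite subr0.
Qed.
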